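(* Let $a<b$, $\gamma>0$, $k\in\{1,2,3\}$ and $\phi\in\mathcal{C}^{k+1}[a,b]$. Define, using the operators of the context, \[ \phi_{1,1}=\phi,\quad \phi_{1,2}(x)=\mathcal{D}_L^{\,\phi'(a)/\gamma}[\phi_{1,1},\gamma](x)-\sum_{m=2}^{k}\left(-\frac1\gamma\right)^m\partial_x^m\phi(a)\,e^{-\gamma(x-a)}, \] \[ \phi_{1,3}(x)=\mathcal{D}_L^{\,0}[\phi_{1,2},\gamma](x)+\sum_{m=2}^{k}(m-1)\left(-\frac1\gamma\right)^m\partial_x^m\phi(a)\,e^{-\gamma(x-a)}, \] \[ \phi_{2,1}=\phi,\quad \phi_{2,2}(x)=\mathcal{D}_R^{\,-\phi'(b)/\gamma}[\phi_{2,1},\gamma](x)-\sum_{m=2}^{k}\left(\frac1\gamma\right)^m\partial_x^m\phi(b)\,e^{-\gamma(b-x)}, \] \[ \phi_{2,3}(x)=\mathcal{D}_R^{\,0}[\phi_{2,2},\gamma](x)+\sum_{m=2}^{k}(m-1)\left(\frac1\gamma\right)^m\partial_x^m\phi(b)\,e^{-\gamma(b-x)}, \] and the modified partial sums \[ \widetilde{\mathcal{P}}^L_k[\phi,\gamma]=\gamma\,\mathcal{D}_L^{\,\phi'(a)/\gamma}[\phi_{1,1},\gamma]+\gamma\sum_{p=2}^{k}\mathcal{D}_L^{\,0}[\phi_{1,p},\gamma]\ \ (k=1,2),\qquad \widetilde{\mathcal{P}}^L_3[\phi,\gamma]=\gamma\,\mathcal{D}_L^{\,\phi'(a)/\gamma}[\phi_{1,1},\gamma]+\gamma\sum_{p=2}^{3}\mathcal{D}_L^{\,0}[\phi_{1,p},\gamma]-\gamma\,\mathcal{D}_0^{\,0,0}[\phi_{1,3},\gamma],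 \] \[ \widetilde{\mathcal{P}}^R_k[\phi,\gamma]=-\gamma\,\mathcal{D}_R^{\,-\phi'(b)/\gamma}[\phi_{2,1},\gamma]-\gamma\sum_{p=2}^{k}\mathcal{D}_R^{\,0}[\phi_{2,p},\gamma]\ \ (k=1,2),\qquad \widetilde{\mathcal{P}}^R_3[\phi,\gamma]=-\gamma\,\mathcal{D}_R^{\,-\phi'(b)/\gamma}[\phi_{2,1},\gamma]-\gamma\sum_{p=2}^{3}\mathcal{D}_R^{\,0}[\phi_{2,p},\gamma]+\gamma\,\mathcal{D}_0^{\,0,0}[\phi_{2,3},\gamma]. \] Then there is a constant $C>0$, independent of $\gamma$ and $\phi$, such that \[ \|\partial_x\phi-\widetilde{\mathcal{P}}^L_k[\phi,\gamma]\|_{\infty}\le C\left(\frac1\gamma\right)^k\|\partial_x^{k+1}\phi\|_\infty,\qquad \|\partial_x\phi-\widetilde{\mathcal{P}}^R_k[\phi,\gamma]\|_{\infty}\le C\left(\frac1\gamma\right)^k\|\partial_x^{k+1}\phi\|_\infty, \] where $\|\cdot\|_\infty$ is the supremum norm on $[a,b]$.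
   Context: Fix $a<b$, $\gamma>0$, $\mu=e^{-\gamma(b-a)}$. For continuous $v$ on $[a,b]$ let $I^{L}[v,\gamma](x)=\gamma\int_a^x e^{-\gamma(x-y)}v(y)\,dy$, $I^{R}[v,\gamma](x)=\gamma\int_x^b e^{-\gamma(y-x)}v(y)\,dy$, $I^{0}[v,\gamma](x)=\frac{\gamma}{2}\int_a^b e^{-\gamma|x-y|}v(y)\,dy$. For a real number $c$: $\mathcal{D}_L^{\,c}[v,\gamma](x)=v(x)-I^L[v,\gamma](x)-(v(a)-c)e^{-\gamma(x-a)}$ (the unique operator of this form with value $c$ at $x=a$); $\mathcal{D}_R^{\,c}[v,\gamma](x)=v(x)-I^R[v,\gamma](x)-(v(b)-c)e^{-\gamma(b-x)}$ (value $c$ at $x=b$). For real numbers $c_a,c_b$: $\mathcal{D}_0^{\,c_a,c_b}[v,\gamma](x)=v(x)-I^0[v,\gamma](x)-A_0e^{-\gamma(x-a)}-B_0e^{-\gamma(b-x)}$ with $A_0=\frac{1}{1-\mu^2}\big(\mu(I^0[v,\gamma](b)-v(b)+c_b)-(I^0[v,\gamma](a)-v(a)+c_a)\big)$, $B_0=\frac{1}{1-\mu^2}\big(\mu(I^0[v,\gamma](a)-v(a)+c_a)-(I^0[v,\gamma](b)-v(b)+c_b)\big)$, so that its values at $a$ and $b$ are $c_a$ and $c_b$. Derivatives at endpoints are one-sided; $\phi'=\partial_x\phi$. *)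

(* Defs.v *)
From Stdlib Require Import Reals Lra.
From Coquelicot Require Import Coquelicot.
Open Scope R_scope.

Definition deriv_within (a b : R) (f f' : R -> R) : Prop :=
  forall x, a <= x <= b ->
    filterlim (fun y => (f y - f x) / (y - x))
      (within (fun y => a <= y <= b /\ y <> x) (locally x))
      (locally (f' x)).

Definition cont_within (a b : R) (f : R -> R) : Prop :=
  forall x, a <= x <= b ->
    filterlim f (within (fun y => a <= y <= b) (locally x)) (locally (f x)).

(* d 0 = phi, d j = j-th derivative of phi on [a,b] for j <= n,
   and d n is continuous on [a,b]:  phi in C^n[a,b]. *)
Definition Cn_ab (n : nat) (a b : R) (d : nat -> R -> R) : Prop :=
  (forall j, (j < n)%nat -> deriv_within a b (d j) (d (S j))) /\
  cont_within a b (d n).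

Definition supnorm (a b : R) (f : R -> R) : R :=
  real (Lub_Rbar (fun r => exists x, a <= x <= b /\ r = Rabs (f x))).

Definition IL (a : R) (g : R) (v : R -> R) (x : R) : R :=
  g * RInt (fun y => exp (- g * (x - y)) * v y) a x.
Definition IR (b : R) (g : R) (v : R -> R) (x : R) : R :=
  g * RInt (fun y => exp (- g * (y - x)) * v y) x b.
Definition I0 (a b : R) (g : R) (v : R -> R) (x : R) : R :=
  g / 2 * RInt (fun y => exp (- g * Rabs (x - y)) * v y) a b.

Definition DL (a : R) (c : R) (g : R) (v : R -> R) (x : R) : R :=
  v x - IL a g v x - (v a - c) * exp (- g * (x - a)).
Definition DR (b : R) (c : R) (g : R) (v : R -> R) (x : R) : R :=
  v x - IR b g v x - (v b - c) * exp (- g * (b - x)).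

Definition D0 (a b : R) (ca cb : R) (g : R) (v : R -> R) (x : R) : R :=
  let mu := exp (- g * (b - a)) in
  let A0 := / (1 - mu ^ 2) *
     (mu * (I0 a b g v b - v b + cb) - (I0 a b g v a - v a + ca)) in
  let B0 := / (1 - mu ^ 2) *
     (mu * (I0 a b g v a - v a + ca) - (I0 a b g v b - v b + cb)) in
  v x - I0 a b g v x - A0 * exp (- g * (x - a)) - B0 * exp (- g * (b - x)).

Definition phi12 (a : R) (k : nat) (g : R) (d : nat -> R -> R) (x : R) : R :=
  DL a (d 1%nat a / g) g (d 0%nat) x
  - sum_n_m (fun m => (- / g) ^ m * d m a * exp (- g * (x - a))) 2 k.

Definition phi13 (a : R) (k : nat) (g : R) (d : nat -> R -> R) (x : R) : R :=
  DL a 0 g (phi12 a k g d) x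
  + sum_n_m (fun m => (INR m - 1) * (- / g) ^ m * d m a * exp (- g * (x - a))) 2 k.

Definition phi22 (b : R) (k : nat) (g : R) (d : nat -> R -> R) (x : R) : R :=
  DR b (- (d 1%nat b / g)) g (d 0%nat) x
  - sum_n_m (fun m => (/ g) ^ m * d m b * exp (- g * (b - x))) 2 k.

Definition phi23 (b : R) (k : nat) (g : R) (d : nat -> R -> R) (x : R) : R :=
  DR b 0 g (phi22 b k g d) x
  + sum_n_m (fun m => (INR m - 1) * (/ g) ^ m * d m b * exp (- g * (b - x))) 2 k.

Definition phi1 (a : R) (k : nat) (g : R) (d : nat -> R -> R) (p : nat) : R -> R :=
  match p with
  | 2%nat => phi12 a k g d
  | 3%nat => phi13 a k g d
  | _ => d 0%nat
  end.
Definition phi2 (b : R) (k : nat) (g : R) (d : nat -> R -> R) (p : nat) : R -> R :=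
  match p with
  | 2%nat => phi22 b k g d
  | 3%nat => phi23 b k g d
  | _ => d 0%nat
  end.

Definition PL (a b : R) (k : nat) (g : R) (d : nat -> R -> R) (x : R) : R :=
  g * DL a (d 1%nat a / g) g (phi1 a k g d 1) x
  + g * sum_n_m (fun p => DL a 0 g (phi1 a k g d p) x) 2 k
  - (if (k =? 3)%nat then g * D0 a b 0 0 g (phi1 a k g d 3) x else 0).

Definition PR (a b : R) (k : nat) (g : R) (d : nat -> R -> R) (x : R) : R :=
  - g * DR b (- (d 1%nat b / g)) g (phi2 b k g d 1) x
  - g * sum_n_m (fun p => DR b 0 g (phi2 b k g d p) x) 2 k
  + (if (k =? 3)%nat then g * D0 a b 0 0 g (phi2 b k g d 3) x else 0).

(* Main.v *)
Require Import Defs.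
From Stdlib Require Import Reals Lra Lia.
From Coquelicot Require Import Coquelicot.
Import Defs.
Open Scope R_scope.

Definition cont (u : R -> R) := forall x, continuous u x.

Lemma exd_cont (f : R -> R) x : ex_derive f x -> continuous f x.
Proof. intros H. apply (ex_derive_continuous (K:=R_AbsRing) (V:=R_NormedModule)); auto. Qed.

Lemma RIu (f : R -> R) a b l : is_RInt f a b l -> RInt f a b = l.
Proof. apply (is_RInt_unique (V:=R_CompleteNormedModule)). Qed.
Lemma RIc (f : R -> R) a b : ex_RInt f a b -> is_RInt f a b (RInt f a b).
Proof. apply (RInt_correct (V:=R_CompleteNormedModule)). Qed.

Lemma RIext (f h : R -> R) a b : (forall x, Rmin a b < x < Rmax a b -> f x = h x) -> RInt f a b = RInt h a b.
Proof. apply (RInt_ext (V:=R_CompleteNormedModule)). Qed.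

Lemma cont_mul u w : cont u -> cont w -> cont (fun y => u y * w y).
Proof. intros Hu Hw x. apply (continuous_mult u w x); auto. Qed.

Lemma cont_plus u w : cont u -> cont w -> cont (fun y => u y + w y).
Proof. intros Hu Hw x. apply (continuous_plus u w x); auto. Qed.

Lemma cont_const c : cont (fun _ => c).
Proof. intros x. apply continuous_const. Qed.

Lemma cont_lin al u w : cont u -> cont w -> cont (fun y => al * u y + w y).
Proof. intros. apply cont_plus; auto. apply cont_mul; auto. apply cont_const. Qed.

Lemma cont_expl p q : cont (fun y => exp (p * y + q)).
Proof. intros x. apply exd_cont. auto_derive. auto. Qed.

Lemma cont_ext u w : (forall y, u y = w y) -> cont u -> cont w.
Proof. intros H Hu x. apply (continuous_ext u w x H (Hu x)). Qed.

Lemma cont_ex_RInt u a x : cont u -> ex_RInt u a x.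
Proof. intros Hu. apply (ex_RInt_continuous (V:=R_CompleteNormedModule)). intros; apply Hu. Qed.

Lemma RInt_lin (f h : R -> R) (al : R) a x :
  ex_RInt f a x -> ex_RInt h a x ->
  RInt (fun y => al * f y + h y) a x = al * RInt f a x + RInt h a x.
Proof.
  intros Hf Hh. apply RIu.
  apply (is_RInt_plus (fun y => al * f y) h).
  - apply (is_RInt_scal f). apply RIc; auto.
  - apply RIc; auto.
Qed.

Lemma exp_split g x y : exp (- g * (x - y)) = exp (- g * x) * exp (g * y).
Proof. rewrite <- exp_plus. f_equal. ring. Qed.

Lemma cont_Eexp g x : cont (fun y => exp (- g * (x - y))).
Proof. apply cont_ext with (u := fun y => exp (g * y + (- g * x))).
  intros; f_equal; ring. apply cont_expl. Qed.

Lemma cont_Eexp2 g x : cont (fun y => exp (- g * (y - x))).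
Proof. apply cont_ext with (u := fun y => exp ((-g) * y + (g * x))).
  intros; f_equal; ring. apply cont_expl. Qed.

Lemma IL_alt a g u x : cont u ->
  IL a g u x = g * exp (- g * x) * RInt (fun y => exp (g * y) * u y) a x.
Proof.
  intros Hu. unfold IL. rewrite Rmult_assoc. f_equal.
  transitivity (RInt (fun y => exp (- g * x) * (exp (g * y) * u y) + (fun _ => 0) y) a x).
  apply RIext. intros. rewrite exp_split. ring.
  rewrite RInt_lin. rewrite RInt_const. unfold scal; simpl; unfold mult; simpl. ring.
  apply cont_ex_RInt. apply cont_mul; auto. apply cont_ext with (u := fun y => exp (g*y+0)).
  intros; f_equal; ring. apply cont_expl.
  apply ex_RInt_const.
Qed.

Lemma cont_prim h a : cont h -> cont (fun x => RInt h a x).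
Proof.
  intros Hh x. apply exd_cont. exists (h x).
  apply (is_derive_RInt h (fun x => RInt h a x) a x).
  apply filter_forall. intros. apply RIc. apply cont_ex_RInt; auto.
  apply Hh.
Qed.

Lemma cont_IL a g u : cont u -> cont (IL a g u).
Proof.
  intros Hu. apply cont_ext with (u := fun x => (g * exp (- g * x)) * RInt (fun y => exp (g * y) * u y) a x).
  intros; symmetry; apply IL_alt; auto.
  apply cont_mul. apply cont_mul. apply cont_const.
  apply cont_ext with (u := fun y => exp ((-g)*y+0)). intros; f_equal; ring. apply cont_expl.
  apply cont_prim. apply cont_mul; auto.
  apply cont_ext with (u := fun y => exp (g*y+0)). intros; f_equal; ring. apply cont_expl.
Qed.

Ltac req := match goal with |- ?x = ?y => change (@eq R x y) end.

Lemma IR_alt b g u x : cont u ->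
  IR b g u x = g * exp (g * x) * RInt (fun y => exp (- g * y) * u y) x b.
Proof.
  intros Hu. unfold IR. rewrite Rmult_assoc. f_equal.
  transitivity (RInt (fun y => exp (g * x) * (exp (- g * y) * u y) + (fun _ => 0) y) x b).
  apply RIext. intros. rewrite <- Rmult_assoc, <- exp_plus. rewrite Rplus_0_r. f_equal. f_equal. ring.
  rewrite RInt_lin. rewrite RInt_const. unfold scal; simpl; unfold mult; simpl. ring.
  apply cont_ex_RInt. apply cont_mul; auto. apply cont_ext with (u := fun y => exp ((-g)*y+0)).
  intros; f_equal; ring. apply cont_expl.
  apply ex_RInt_const.
Qed.

Lemma cont_IR b g u : cont u -> cont (IR b g u).
Proof.
  intros Hu.
  assert (Hh : cont (fun y => exp (- g * y) * u y)).
  { apply cont_mul; auto. apply cont_ext with (u := fun y => exp ((-g)*y+0)). intros; f_equal; ring. apply cont_expl. }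
  apply cont_ext with (u := fun x => (g * exp (g * x)) * (-1 * RInt (fun y => exp (- g * y) * u y) b x + 0)).
  intros; rewrite IR_alt; auto. f_equal.
  rewrite <- (opp_RInt_swap (V:=R_CompleteNormedModule)). simpl. unfold opp; simpl. ring.
  apply cont_ex_RInt; auto.
  apply cont_mul. apply cont_mul. apply cont_const.
  apply cont_ext with (u := fun y => exp (g*y+0)). intros; f_equal; ring. apply cont_expl.
  apply cont_lin. apply cont_prim; auto. apply cont_const.
Qed.

Lemma IL_lin a g al u w x : cont u -> cont w ->
  IL a g (fun y => al * u y + w y) x = al * IL a g u x + IL a g w x.
Proof.
  intros Hu Hw. unfold IL.
  rewrite (RIext _ (fun y => al * (exp (- g * (x - y)) * u y) + exp (- g * (x - y)) * w y)).
  rewrite RInt_lin. ring.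
  apply cont_ex_RInt; apply cont_mul; auto; apply cont_Eexp.
  apply cont_ex_RInt; apply cont_mul; auto; apply cont_Eexp.
  intros; ring.
Qed.

Lemma IR_lin b g al u w x : cont u -> cont w ->
  IR b g (fun y => al * u y + w y) x = al * IR b g u x + IR b g w x.
Proof.
  intros Hu Hw. unfold IR.
  rewrite (RIext _ (fun y => al * (exp (- g * (y - x)) * u y) + exp (- g * (y - x)) * w y)).
  rewrite RInt_lin. ring.
  apply cont_ex_RInt; apply cont_mul; auto; apply cont_Eexp2.
  apply cont_ex_RInt; apply cont_mul; auto; apply cont_Eexp2.
  intros; ring.
Qed.

Lemma IL_ext a b g u w x : (forall y, a <= y <= b -> u y = w y) -> a <= x <= b ->
  IL a g u x = IL a g w x.
Proof.
  intros H Hx. unfold IL. f_equal. apply RIext. intros y Hy.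
  unfold Rmin, Rmax in Hy. destruct (Rle_dec a x); [|lra].
  rewrite H; auto. lra.
Qed.

Lemma IR_ext a b g u w x : (forall y, a <= y <= b -> u y = w y) -> a <= x <= b ->
  IR b g u x = IR b g w x.
Proof.
  intros H Hx. unfold IR. f_equal. apply RIext. intros y Hy.
  unfold Rmin, Rmax in Hy. destruct (Rle_dec x b); [|lra].
  rewrite H; auto. lra.
Qed.

Lemma derR (f df : R -> R) a b :
  (forall x, Rmin a b <= x <= Rmax a b -> is_derive f x (df x)) ->
  (forall x, Rmin a b <= x <= Rmax a b -> continuous df x) ->
  is_RInt df a b (f b - f a).
Proof. intros. apply (is_RInt_derive (V:=R_CompleteNormedModule)); auto. Qed.

Lemma der_eq (f : R -> R) x l l' : is_derive f x l -> l = l' -> is_derive f x l'.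
Proof. intros H ->; auto. Qed.

Lemma der_mul (f h : R -> R) x df dh : is_derive f x df -> is_derive h x dh ->
  is_derive (fun y => f y * h y) x (df * h x + f x * dh).
Proof. intros. apply (is_derive_mult f h); auto. intros; apply Rmult_comm. Qed.

Lemma IL_bound a b g u M x : 0 < g -> cont u -> (forall y, a <= y <= b -> Rabs (u y) <= M) ->
  a <= x <= b -> Rabs (IL a g u x) <= M.
Proof.
  intros Hg Hu HM Hx.
  assert (M0 : 0 <= M). { apply Rle_trans with (Rabs (u a)). apply Rabs_pos. apply HM; lra. }
  unfold IL. rewrite Rabs_mult, (Rabs_pos_eq g) by lra.
  assert (cf : cont (fun y => exp (- g * (x - y)) * u y)). { apply cont_mul; auto; apply cont_Eexp. }
  assert (h1 := abs_RInt_le (fun y => exp (- g * (x - y)) * u y) a x ltac:(lra) (cont_ex_RInt _ _ _ cf)).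
  assert (h2 : RInt (fun t => Rabs (exp (- g * (x - t)) * u t)) a x <= RInt (fun t => M * exp (- g * (x - t))) a x).
  { apply RInt_le. lra. apply cont_ex_RInt. intros z. apply (continuous_comp _ Rabs). apply cf. apply continuous_Rabs.
    apply cont_ex_RInt. apply cont_mul. apply cont_const. apply cont_Eexp.
    intros t Ht. rewrite Rabs_mult, Rabs_pos_eq by (left; apply exp_pos). rewrite Rmult_comm.
    apply Rmult_le_compat_r. left; apply exp_pos. apply HM. lra. }
  assert (h3 : RInt (fun t => M * exp (- g * (x - t))) a x = M / g - M / g * exp (- g * (x - a))).
  { assert (D : is_RInt (fun t => M * exp (- g * (x - t))) a x
      ((fun t => M / g * exp (- g * (x - t))) x - (fun t => M / g * exp (- g * (x - t))) a)).
    { apply (derR (fun t => M / g * exp (- g * (x - t)))). intros t _. auto_derive. auto. req. unfold Rminus. field. lra.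
      intros t _. apply cont_mul. apply cont_const. apply cont_Eexp. }
    apply RIu in D. rewrite D. simpl. replace (- g * (x - x)) with 0 by ring. rewrite exp_0. ring. }
  rewrite h3 in h2.
  assert (Hp := exp_pos (- g * (x - a))).
  apply Rle_trans with (g * (M / g - M / g * exp (- g * (x - a)))).
  apply Rmult_le_compat_l. lra. lra.
  replace (g * (M / g - M / g * exp (- g * (x - a)))) with (M - M * exp (- g * (x - a))) by (field; lra).
  nra.
Qed.

Lemma IR_bound a b g u M x : 0 < g -> cont u -> (forall y, a <= y <= b -> Rabs (u y) <= M) ->
  a <= x <= b -> Rabs (IR b g u x) <= M.
Proof.
  intros Hg Hu HM Hx.
  assert (M0 : 0 <= M). { apply Rle_trans with (Rabs (u b)). apply Rabs_pos. apply HM; lra. }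
  unfold IR. rewrite Rabs_mult, (Rabs_pos_eq g) by lra.
  assert (cf : cont (fun y => exp (- g * (y - x)) * u y)). { apply cont_mul; auto; apply cont_Eexp2. }
  assert (h1 := abs_RInt_le (fun y => exp (- g * (y - x)) * u y) x b ltac:(lra) (cont_ex_RInt _ _ _ cf)).
  assert (h2 : RInt (fun t => Rabs (exp (- g * (t - x)) * u t)) x b <= RInt (fun t => M * exp (- g * (t - x))) x b).
  { apply RInt_le. lra. apply cont_ex_RInt. intros z. apply (continuous_comp _ Rabs). apply cf. apply continuous_Rabs.
    apply cont_ex_RInt. apply cont_mul. apply cont_const. apply cont_Eexp2.
    intros t Ht. rewrite Rabs_mult, Rabs_pos_eq by (left; apply exp_pos). rewrite Rmult_comm.
    apply Rmult_le_compat_r. left; apply exp_pos. apply HM. lra. }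
  assert (h3 : RInt (fun t => M * exp (- g * (t - x))) x b = M / g - M / g * exp (- g * (b - x))).
  { assert (D : is_RInt (fun t => M * exp (- g * (t - x))) x b
      ((fun t => - (M / g) * exp (- g * (t - x))) b - (fun t => - (M / g) * exp (- g * (t - x))) x)).
    { apply (derR (fun t => - (M / g) * exp (- g * (t - x)))). intros t _. auto_derive. auto. req. unfold Rminus. field. lra.
      intros t _. apply cont_mul. apply cont_const. apply cont_Eexp2. }
    apply RIu in D. rewrite D. simpl. replace (- g * (x - x)) with 0 by ring. rewrite exp_0. ring. }
  rewrite h3 in h2.
  assert (Hp := exp_pos (- g * (b - x))).
  apply Rle_trans with (g * (M / g - M / g * exp (- g * (b - x)))).
  apply Rmult_le_compat_l. lra. lra.
  replace (g * (M / g - M / g * exp (- g * (b - x)))) with (M - M * exp (- g * (b - x))) by (field; lra).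
  nra.
Qed.

Lemma der_cont (G H : R -> R) : (forall y, is_derive G y (H y)) -> cont G.
Proof. intros HG x. apply exd_cont. exists (H x). auto. Qed.

Lemma IBP_L a g G H x : 0 < g -> (forall y, is_derive G y (H y)) -> cont H ->
  G x - IL a g G x - G a * exp (- g * (x - a)) = / g * IL a g H x.
Proof.
  intros Hg HG HH. assert (cG := der_cont G H HG).
  assert (D : is_RInt (fun y => g * (exp (- g * (x - y)) * G y) + exp (- g * (x - y)) * H y) a x
     ((fun y => exp (- g * (x - y)) * G y) x - (fun y => exp (- g * (x - y)) * G y) a)).
  { apply (derR (fun y => exp (- g * (x - y)) * G y)). intros y _. eapply der_eq. apply (der_mul _ _ y (g * exp (- g * (x - y)))). 2: apply HG.
    auto_derive. auto. req. unfold Rminus. ring. simpl. ring.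
    intros y _. apply cont_lin. apply cont_mul; auto; apply cont_Eexp. apply cont_mul; auto; apply cont_Eexp. }
  apply RIu in D. rewrite RInt_lin in D.
  2,3: apply cont_ex_RInt; apply cont_mul; auto; apply cont_Eexp.
  simpl in D. replace (- g * (x - x)) with 0 in D by ring. rewrite exp_0 in D.
  unfold IL. field_simplify; [|lra]. rewrite Rmult_1_l in D. lra.
Qed.

Lemma IBP_R b g G H x : 0 < g -> (forall y, is_derive G y (H y)) -> cont H ->
  G x - IR b g G x - G b * exp (- g * (b - x)) = - / g * IR b g H x.
Proof.
  intros Hg HG HH. assert (cG := der_cont G H HG).
  assert (D : is_RInt (fun y => (-g) * (exp (- g * (y - x)) * G y) + exp (- g * (y - x)) * H y) x b
     ((fun y => exp (- g * (y - x)) * G y) b - (fun y => exp (- g * (y - x)) * G y) x)).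
  { apply (derR (fun y => exp (- g * (y - x)) * G y)). intros y _. eapply der_eq. apply (der_mul _ _ y (- g * exp (- g * (y - x)))). 2: apply HG.
    auto_derive. auto. req. unfold Rminus. ring. simpl. ring.
    intros y _. apply cont_lin. apply cont_mul; auto; apply cont_Eexp2. apply cont_mul; auto; apply cont_Eexp2. }
  apply RIu in D. rewrite RInt_lin in D.
  2,3: apply cont_ex_RInt; apply cont_mul; auto; apply cont_Eexp2.
  simpl in D. replace (- g * (x - x)) with 0 in D by ring. rewrite exp_0 in D.
  unfold IR. field_simplify; [|lra]. rewrite Rmult_1_l in D. lra.
Qed.

Lemma ball_R (x y : R) (e : R) : @ball R_UniformSpace x e y <-> Rabs (y - x) < e.
Proof. split; intro H; exact H. Qed.

Lemma within_ed (P : R -> Prop) (F : R -> R) x l :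
  filterlim F (within P (locally x)) (locally l) ->
  forall eps, 0 < eps -> exists del, 0 < del /\
    forall y, P y -> Rabs (y - x) < del -> Rabs (F y - l) < eps.
Proof.
  intros H eps Heps.
  destruct (proj1 (filterlim_locally F l) H (mkposreal eps Heps)) as [del Hdel].
  exists del. split. apply cond_pos. intros y Py Hy.
  apply (Hdel y). apply ball_R. exact Hy. exact Py.
Qed.

Definition clamp (a b y : R) : R :=
  if Rlt_dec y a then a else if Rlt_dec b y then b else y.
Definition clampf (a b : R) (f : R -> R) (y : R) : R := f (clamp a b y).
Definition linext (a b : R) (f f' : R -> R) (y : R) : R :=
  if Rlt_dec y a then f a + f' a * (y - a)
  else if Rlt_dec b y then f b + f' b * (y - b) else f y.

Lemma clamp_in a b y : a < b -> a <= clamp a b y <= b.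
Proof. intros. unfold clamp. destruct (Rlt_dec y a); [lra|]. destruct (Rlt_dec b y); lra. Qed.

Lemma clamp_id a b y : a <= y <= b -> clamp a b y = y.
Proof. intros. unfold clamp. destruct (Rlt_dec y a); [lra|]. destruct (Rlt_dec b y); lra. Qed.

Lemma clamp_lip a b x y : a < b -> Rabs (clamp a b y - clamp a b x) <= Rabs (y - x).
Proof.
  intros. unfold clamp.
  destruct (Rlt_dec y a); destruct (Rlt_dec x a); try destruct (Rlt_dec b y); try destruct (Rlt_dec b x);
  try (rewrite Rminus_diag, Rabs_R0; apply Rabs_pos);
  assert (h1 := Rle_abs (y - x)); assert (h2 := Rle_abs (- (y - x))); rewrite Rabs_Ropp in h2;
  apply Rabs_le; lra.
Qed.

Lemma clampf_id a b f y : a <= y <= b -> clampf a b f y = f y.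
Proof. intros. unfold clampf. rewrite clamp_id; auto. Qed.

Lemma linext_id a b f f' y : a <= y <= b -> linext a b f f' y = f y.
Proof. intros. unfold linext. destruct (Rlt_dec y a); [lra|]. destruct (Rlt_dec b y); lra. Qed.

Lemma linext_lt a b f f' y : y < a -> linext a b f f' y = f a + f' a * (y - a).
Proof. intros. unfold linext. destruct (Rlt_dec y a); lra. Qed.

Lemma linext_gt a b f f' y : a < b -> b < y -> linext a b f f' y = f b + f' b * (y - b).
Proof. intros. unfold linext. destruct (Rlt_dec y a); [lra|]. destruct (Rlt_dec b y); lra. Qed.

Lemma deriv_cont a b f f' : deriv_within a b f f' -> cont_within a b f.
Proof.
  intros Hd x Hx. apply filterlim_locally. intros eps.
  destruct (within_ed _ _ _ _ (Hd x Hx) 1 Rlt_0_1) as [d1 [Hd1 H1]].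
  set (K := Rabs (f' x) + 1).
  assert (HK : 0 < K) by (unfold K; assert (T := Rabs_pos (f' x)); lra).
  assert (He := cond_pos eps).
  assert (Hdel : 0 < Rmin d1 (eps / K)). { apply Rmin_pos; auto. apply Rdiv_lt_0_compat; auto. }
  exists (mkposreal _ Hdel). intros y Hy Py. apply ball_R in Hy. apply ball_R. simpl in Hy.
  destruct (Req_dec y x) as [->|Hne]. rewrite Rminus_diag, Rabs_R0. auto.
  assert (Hyx : Rabs (y - x) < d1) by (apply Rlt_le_trans with (1 := Hy); apply Rmin_l).
  assert (Hyx2 : Rabs (y - x) < eps / K) by (apply Rlt_le_trans with (1 := Hy); apply Rmin_r).
  specialize (H1 y (conj Py Hne) Hyx).
  assert (Hq : Rabs ((f y - f x) / (y - x)) <= K).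
  { unfold K. replace ((f y - f x) / (y - x)) with (((f y - f x) / (y - x) - f' x) + f' x) by ring.
    eapply Rle_trans. apply Rabs_triang. lra. }
  assert (Hne' : y - x <> 0) by lra.
  replace (f y - f x) with ((f y - f x) / (y - x) * (y - x)) by (field; auto).
  rewrite Rabs_mult.
  apply Rle_lt_trans with (K * Rabs (y - x)).
  apply Rmult_le_compat_r. apply Rabs_pos. auto.
  replace (pos eps) with (K * (eps / K)) by (field; lra).
  apply Rmult_lt_compat_l; auto.
Qed.

Lemma clampf_cont a b f : a < b -> cont_within a b f -> cont (clampf a b f).
Proof.
  intros Hab Hc x. apply filterlim_locally. intros eps.
  set (x0 := clamp a b x).
  assert (Hx0 : a <= x0 <= b) by (apply clamp_in; auto).
  destruct (within_ed _ _ _ _ (Hc x0 Hx0) eps (cond_pos eps)) as [d1 [Hd1 H1]].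
  exists (mkposreal _ Hd1). intros y Hy. apply ball_R in Hy. apply ball_R. simpl in Hy.
  unfold clampf. apply H1. apply clamp_in; auto.
  eapply Rle_lt_trans. apply clamp_lip; auto. auto.
Qed.

Lemma linext_der a b f f' : a < b -> deriv_within a b f f' ->
  forall y, is_derive (linext a b f f') y (clampf a b f' y).
Proof.
  intros Hab Hd y. apply is_derive_Reals. intros eps Heps.
  destruct (Rlt_dec y a) as [Hya|Hya].
  { assert (Hp : 0 < a - y) by lra. exists (mkposreal _ Hp). intros h Hh Hlt. simpl in Hlt.
    rewrite !linext_lt; [| lra | ].
    2: { destruct (Rabs_pos h); unfold Rabs in Hlt; destruct (Rcase_abs h); lra. }
    unfold clampf, clamp. destruct (Rlt_dec y a); [|lra].
    replace ((f a + f' a * (y + h - a) - (f a + f' a * (y - a))) / h - f' a) with 0 by (field; auto).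
    rewrite Rabs_R0; auto. }
  destruct (Rlt_dec b y) as [Hby|Hby].
  { assert (Hp : 0 < y - b) by lra. exists (mkposreal _ Hp). intros h Hh Hlt. simpl in Hlt.
    rewrite !linext_gt; auto.
    2: { destruct (Rabs_pos h); unfold Rabs in Hlt; destruct (Rcase_abs h); lra. }
    unfold clampf, clamp. destruct (Rlt_dec y a); [lra|]. destruct (Rlt_dec b y); [|lra].
    replace ((f b + f' b * (y + h - b) - (f b + f' b * (y - b))) / h - f' b) with 0 by (field; auto).
    rewrite Rabs_R0; auto. }
  assert (Hy : a <= y <= b) by lra.
  destruct (within_ed _ _ _ _ (Hd y Hy) eps Heps) as [d1 [Hd1 H1]].
  rewrite clampf_id; auto. rewrite (linext_id a b f f' y); auto.
  assert (Habs : forall h, Rabs h < 0 -> False) by (intros h0 H0; assert (T := Rabs_pos h0); lra).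
  assert (Hab1 : forall h, - Rabs h <= h <= Rabs h).
  { intros h0. assert (h1 := Rle_abs h0); assert (h2 := Rle_abs (- h0)); rewrite Rabs_Ropp in h2; lra. }
  destruct (Rtotal_order a y) as [Hay|[Hay|Hay]]; [|subst y|lra].
  destruct (Rtotal_order y b) as [Hyb|[Hyb|Hyb]]; [|subst y|lra].
  - assert (Hp : 0 < Rmin d1 (Rmin (y - a) (b - y))) by (repeat apply Rmin_pos; lra).
    exists (mkposreal _ Hp). intros h Hh Hlt. simpl in Hlt.
    assert (Hl1 : Rabs h < d1) by (apply Rlt_le_trans with (1 := Hlt); apply Rmin_l).
    assert (Hl2 : Rabs h < Rmin (y - a) (b - y)) by (apply Rlt_le_trans with (1 := Hlt); apply Rmin_r).
    assert (Hl3 : Rabs h < y - a) by (apply Rlt_le_trans with (1 := Hl2); apply Rmin_l).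
    assert (Hl4 : Rabs h < b - y) by (apply Rlt_le_trans with (1 := Hl2); apply Rmin_r).
    specialize (Hab1 h).
    rewrite linext_id; [|lra].
    replace h with (y + h - y) at 2 by ring.
    apply H1. split. lra. lra. replace (y + h - y) with h by ring; auto.
  - assert (Hp : 0 < Rmin d1 (b - a)) by (apply Rmin_pos; lra).
    exists (mkposreal _ Hp). intros h Hh Hlt. simpl in Hlt.
    assert (Hl1 : Rabs h < d1) by (apply Rlt_le_trans with (1 := Hlt); apply Rmin_l).
    assert (Hl2 : Rabs h < b - a) by (apply Rlt_le_trans with (1 := Hlt); apply Rmin_r).
    specialize (Hab1 h).
    destruct (Rlt_dec b (b + h)).
    + rewrite linext_gt; auto.
      replace ((f b + f' b * (b + h - b) - f b) / h - f' b) with 0 by (field; auto).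
      rewrite Rabs_R0; auto.
    + rewrite linext_id; [|lra].
      replace h with (b + h - b) at 2 by ring.
      apply H1. split. lra. lra. replace (b + h - b) with h by ring; auto.
  - assert (Hp : 0 < Rmin d1 (b - a)) by (apply Rmin_pos; lra).
    exists (mkposreal _ Hp). intros h Hh Hlt. simpl in Hlt.
    assert (Hl1 : Rabs h < d1) by (apply Rlt_le_trans with (1 := Hlt); apply Rmin_l).
    assert (Hl2 : Rabs h < b - a) by (apply Rlt_le_trans with (1 := Hlt); apply Rmin_r).
    specialize (Hab1 h).
    destruct (Rlt_dec (a + h) a).
    + rewrite linext_lt; auto.
      replace ((f a + f' a * (a + h - a) - f a) / h - f' a) with 0 by (field; auto).
      rewrite Rabs_R0; auto.
    + rewrite linext_id; [|lra].
      replace h with (a + h - a) at 2 by ring.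
      apply H1. split. lra. lra. replace (a + h - a) with h by ring; auto.
Qed.

Lemma exp_le1 x : x <= 0 -> exp x <= 1.
Proof. intros H. destruct (Rle_lt_or_eq_dec x 0 H) as [H1|H1].
  rewrite <- exp_0. left. apply exp_increasing; auto. subst. rewrite exp_0. lra. Qed.

Lemma exp_lt1 x : x < 0 -> exp x < 1.
Proof. intros H. rewrite <- exp_0. apply exp_increasing; auto. Qed.

Lemma I0_split a b g u y : cont u -> a <= y <= b ->
  I0 a b g u y = (IL a g u y + IR b g u y) / 2.
Proof.
  intros Hu Hy. unfold I0, IL, IR.
  set (f := fun z => exp (- g * Rabs (y - z)) * u z).
  assert (E1 : forall z, Rmin a y < z < Rmax a y -> exp (- g * (y - z)) * u z = f z).
  { intros z Hz. unfold Rmin, Rmax in Hz. destruct (Rle_dec a y); [|lra].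
    unfold f. rewrite Rabs_pos_eq by lra. reflexivity. }
  assert (E2 : forall z, Rmin y b < z < Rmax y b -> exp (- g * (z - y)) * u z = f z).
  { intros z Hz. unfold Rmin, Rmax in Hz. destruct (Rle_dec y b); [|lra].
    unfold f. rewrite Rabs_minus_sym. rewrite Rabs_pos_eq by lra. reflexivity. }
  assert (X1 : ex_RInt f a y).
  { apply (ex_RInt_ext (V:=R_NormedModule) (fun z => exp (- g * (y - z)) * u z)). exact E1.
    apply cont_ex_RInt. apply cont_mul; auto; apply cont_Eexp. }
  assert (X2 : ex_RInt f y b).
  { apply (ex_RInt_ext (V:=R_NormedModule) (fun z => exp (- g * (z - y)) * u z)). exact E2.
    apply cont_ex_RInt. apply cont_mul; auto; apply cont_Eexp2. }
  rewrite <- (RInt_Chasles (V:=R_CompleteNormedModule) f a y b X1 X2).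
  rewrite (RIext _ _ a y E1), (RIext _ _ y b E2).
  simpl. unfold plus; simpl. field.
Qed.

Lemma I0_lin a b g al u w y : cont u -> cont w -> a <= y <= b ->
  I0 a b g (fun z => al * u z + w z) y = al * I0 a b g u y + I0 a b g w y.
Proof.
  intros Hu Hw Hy. rewrite !I0_split; auto. rewrite IL_lin, IR_lin; auto. field.
  apply cont_lin; auto.
Qed.

Lemma I0_bound a b g u M y : 0 < g -> cont u -> (forall z, a <= z <= b -> Rabs (u z) <= M) ->
  a <= y <= b -> Rabs (I0 a b g u y) <= M.
Proof.
  intros Hg Hu HM Hy. rewrite I0_split; auto.
  assert (H1 := IL_bound a b g u M y Hg Hu HM Hy).
  assert (H2 := IR_bound a b g u M y Hg Hu HM Hy).
  unfold Rdiv. rewrite Rabs_mult, Rabs_inv, (Rabs_pos_eq 2) by lra.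
  assert (H3 := Rabs_triang (IL a g u y) (IR b g u y)). lra.
Qed.

Lemma D0_bound a b g v r p q K x : a < b -> 0 < g ->
  (forall y, a <= y <= b -> v y - I0 a b g v y = r y + p * exp (- g * (y - a)) + q * exp (- g * (b - y))) ->
  (forall y, a <= y <= b -> Rabs (r y) <= K) -> a <= x <= b ->
  Rabs (D0 a b 0 0 g v x) <= 2 * K.
Proof.
  intros Hab Hg Hv Hr Hx. unfold D0. cbv zeta.
  assert (Ha := Hv a ltac:(lra)). assert (Hb := Hv b ltac:(lra)). assert (Hxx := Hv x Hx).
  replace (- g * (a - a)) with 0 in Ha by ring. replace (- g * (b - b)) with 0 in Hb by ring.
  rewrite exp_0 in Ha, Hb.
  set (mu := exp (- g * (b - a))) in *.
  set (E := exp (- g * (x - a))) in *. set (F := exp (- g * (b - x))) in *.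
  assert (HmuEF : mu = E * F). { unfold mu, E, F. rewrite <- exp_plus. f_equal. ring. }
  assert (HE0 : 0 < E) by apply exp_pos. assert (HF0 : 0 < F) by apply exp_pos.
  assert (HE1 : E <= 1) by (apply exp_le1; nra). assert (HF1 : F <= 1) by (apply exp_le1; nra).
  assert (Hmu1 : mu < 1) by (apply exp_lt1; nra).
  assert (Hmu0 : 0 < mu) by apply exp_pos.
  assert (HD : 1 - mu ^ 2 <> 0) by nra.
  assert (Heq : v x - I0 a b g v x -
      / (1 - mu ^ 2) * (mu * (I0 a b g v b - v b + 0) - (I0 a b g v a - v a + 0)) * E -
      / (1 - mu ^ 2) * (mu * (I0 a b g v a - v a + 0) - (I0 a b g v b - v b + 0)) * F
      = r x - (r a * ((E - mu * F) / (1 - mu ^ 2)) + r b * ((F - mu * E) / (1 - mu ^ 2)))).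
  { assert (Ia : I0 a b g v a = v a - (r a + p * 1 + q * mu)) by lra.
    assert (Ib : I0 a b g v b = v b - (r b + p * mu + q * 1)) by lra.
    rewrite Ia, Ib. rewrite Hxx. field. auto. }
  rewrite Heq.
  set (cA := (E - mu * F) / (1 - mu ^ 2)). set (cB := (F - mu * E) / (1 - mu ^ 2)).
  assert (HD' : 0 < 1 - mu ^ 2) by nra.
  assert (cA0 : 0 <= cA). { unfold cA. apply Rmult_le_pos. rewrite HmuEF. nra. left; apply Rinv_0_lt_compat; auto. }
  assert (cB0 : 0 <= cB). { unfold cB. apply Rmult_le_pos. rewrite HmuEF. nra. left; apply Rinv_0_lt_compat; auto. }
  assert (cAB : cA + cB <= 1).
  { unfold cA, cB. replace ((E - mu * F) / (1 - mu ^ 2) + (F - mu * E) / (1 - mu ^ 2)) with ((E + F) / (1 + mu)) by (field; nra).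
    apply Rmult_le_reg_r with (1 + mu). lra. unfold Rdiv. rewrite Rmult_assoc, Rinv_l by lra. rewrite HmuEF. nra. }
  assert (Ra := Hr a ltac:(lra)). assert (Rb := Hr b ltac:(lra)). assert (Rx := Hr x Hx).
  assert (T1 : Rabs (r a * cA + r b * cB) <= K).
  { eapply Rle_trans. apply Rabs_triang. rewrite !Rabs_mult, (Rabs_pos_eq cA), (Rabs_pos_eq cB) by auto.
    assert (K0 : 0 <= K) by (eapply Rle_trans; [apply Rabs_pos|apply Ra]).
    nra. }
  unfold Rminus. eapply Rle_trans. apply Rabs_triang. rewrite Rabs_Ropp. lra.
Qed.

Lemma sup_le a b u B : a <= b -> (forall x, a <= x <= b -> Rabs (u x) <= B) -> supnorm a b u <= B.
Proof.
  intros Hab HB. unfold supnorm.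
  destruct (Lub_Rbar_correct (fun r => exists x, a <= x <= b /\ r = Rabs (u x))) as [H1 H2].
  assert (U : Rbar_le (Lub_Rbar (fun r => exists x, a <= x <= b /\ r = Rabs (u x))) (Finite B)).
  { apply H2. intros r [x [Hx ->]]. simpl. apply HB; auto. }
  assert (L : Rbar_le (Finite (Rabs (u a))) (Lub_Rbar (fun r => exists x, a <= x <= b /\ r = Rabs (u x)))).
  { apply H1. exists a. split; auto; lra. }
  destruct (Lub_Rbar _); simpl in *; try contradiction. auto.
Qed.

Lemma sup_ge a b u B : a <= b -> (forall x, a <= x <= b -> Rabs (u x) <= B) ->
  forall x, a <= x <= b -> Rabs (u x) <= supnorm a b u.
Proof.
  intros Hab HB x Hx. unfold supnorm.
  destruct (Lub_Rbar_correct (fun r => exists x, a <= x <= b /\ r = Rabs (u x))) as [H1 H2].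
  assert (U : Rbar_le (Lub_Rbar (fun r => exists x, a <= x <= b /\ r = Rabs (u x))) (Finite B)).
  { apply H2. intros r [z [Hz ->]]. simpl. apply HB; auto. }
  assert (L : Rbar_le (Finite (Rabs (u x))) (Lub_Rbar (fun r => exists x, a <= x <= b /\ r = Rabs (u x)))).
  { apply H1. exists x. split; auto. }
  destruct (Lub_Rbar _); simpl in *; try contradiction. auto.
Qed.

Lemma cont_bounded a b u : a <= b -> cont u -> exists B, forall x, a <= x <= b -> Rabs (u x) <= B.
Proof.
  intros Hab Hu.
  destruct (continuity_ab_maj (fun y => Rabs (u y)) a b Hab) as [Mx [HM _]].
  intros c _. apply continuity_pt_filterlim. apply (continuous_comp u Rabs). apply Hu. apply continuous_Rabs.
  exists (Rabs (u Mx)). auto.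
Qed.

Lemma IL_a a g u : IL a g u a = 0.
Proof. unfold IL. rewrite (RInt_point (V:=R_CompleteNormedModule)). unfold zero; simpl. ring. Qed.
Lemma IR_b b g u : IR b g u b = 0.
Proof. unfold IR. rewrite (RInt_point (V:=R_CompleteNormedModule)). unfold zero; simpl. ring. Qed.

Lemma cont_lin4 a1 a2 a3 a4 u1 u2 u3 u4 : cont u1 -> cont u2 -> cont u3 -> cont u4 ->
  cont (fun z => a1 * u1 z + a2 * u2 z + a3 * u3 z + a4 * u4 z).
Proof.
  intros. apply cont_ext with (u := fun z => a1 * u1 z + (fun z => a2 * u2 z + (fun z => a3 * u3 z + (fun z => a4 * u4 z + 0) z) z) z).
  intros; simpl; ring. repeat (apply cont_lin; auto). apply cont_const.
Qed.

Lemma IL_lin4 a g a1 a2 a3 a4 u1 u2 u3 u4 x : cont u1 -> cont u2 -> cont u3 -> cont u4 ->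
  IL a g (fun z => a1 * u1 z + a2 * u2 z + a3 * u3 z + a4 * u4 z) x =
  a1 * IL a g u1 x + a2 * IL a g u2 x + a3 * IL a g u3 x + a4 * IL a g u4 x.
Proof.
  intros.
  transitivity (IL a g (fun z => a1 * u1 z + (fun z => a2 * u2 z + (fun z => a3 * u3 z + (fun z => a4 * u4 z + (fun _ => 0) z) z) z) z) x).
  unfold IL. f_equal. apply RIext. intros; simpl; ring.
  rewrite IL_lin; auto. rewrite IL_lin; auto. rewrite IL_lin; auto. rewrite IL_lin; auto.
  replace (IL a g (fun _ => 0) x) with 0. ring.
  unfold IL. rewrite (RIext _ (fun _ => 0)) by (intros; ring). rewrite RInt_const. unfold scal; simpl; unfold mult; simpl. ring.
  apply cont_const.
  apply cont_lin; auto; apply cont_const.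
  apply cont_lin; auto; apply cont_lin; auto; apply cont_const.
  apply cont_lin; auto; apply cont_lin; auto; apply cont_lin; auto; apply cont_const.
Qed.

Lemma IR_lin4 b g a1 a2 a3 a4 u1 u2 u3 u4 x : cont u1 -> cont u2 -> cont u3 -> cont u4 ->
  IR b g (fun z => a1 * u1 z + a2 * u2 z + a3 * u3 z + a4 * u4 z) x =
  a1 * IR b g u1 x + a2 * IR b g u2 x + a3 * IR b g u3 x + a4 * IR b g u4 x.
Proof.
  intros.
  transitivity (IR b g (fun z => a1 * u1 z + (fun z => a2 * u2 z + (fun z => a3 * u3 z + (fun z => a4 * u4 z + (fun _ => 0) z) z) z) z) x).
  unfold IR. f_equal. apply RIext. intros; simpl; ring.
  rewrite IR_lin; auto. rewrite IR_lin; auto. rewrite IR_lin; auto. rewrite IR_lin; auto.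
  replace (IR b g (fun _ => 0) x) with 0. ring.
  unfold IR. rewrite (RIext _ (fun _ => 0)) by (intros; ring). rewrite RInt_const. unfold scal; simpl; unfold mult; simpl. ring.
  apply cont_const.
  apply cont_lin; auto; apply cont_const.
  apply cont_lin; auto; apply cont_lin; auto; apply cont_const.
  apply cont_lin; auto; apply cont_lin; auto; apply cont_lin; auto; apply cont_const.
Qed.

Lemma I0_ext a b g u w x : (forall y, a <= y <= b -> u y = w y) -> a <= b ->
  I0 a b g u x = I0 a b g w x.
Proof.
  intros H Hab. unfold I0. f_equal. apply RIext. intros y Hy.
  unfold Rmin, Rmax in Hy. destruct (Rle_dec a b); [|lra].
  rewrite H; auto. lra.
Qed.

Lemma D0_ext a b g u w x : (forall y, a <= y <= b -> u y = w y) -> a <= b -> a <= x <= b ->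
  D0 a b 0 0 g u x = D0 a b 0 0 g w x.
Proof.
  intros H Hab Hx. unfold D0. cbv zeta.
  rewrite !(I0_ext a b g u w) by auto.
  rewrite !H by lra. reflexivity.
Qed.

Lemma sum23 (F : nat -> R) : sum_n_m F 2 3 = F 2%nat + F 3%nat.
Proof. rewrite (sum_n_m_Chasles F 2 2 3) by lia. rewrite !sum_n_n. reflexivity. Qed.
Lemma sum22 (F : nat -> R) : sum_n_m F 2 2 = F 2%nat.
Proof. apply sum_n_n. Qed.
Lemma sum21 (F : nat -> R) : sum_n_m F 2 1 = 0.
Proof. rewrite (sum_n_m_zero F 2 1) by lia. reflexivity. Qed.

Definition Hyp (a b g : R) (k : nat) (c d : nat -> R -> R) : Prop :=
  (forall j, (j <= S k)%nat -> cont (c j)) /\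
  (forall j y, (j <= S k)%nat -> a <= y <= b -> d j y = c j y) /\
  (forall j x, (j < S k)%nat -> a <= x <= b -> c j x - IL a g (c j) x - c j a * exp (- g * (x - a)) = / g * IL a g (c (S j)) x) /\
  (forall j x, (j < S k)%nat -> a <= x <= b -> c j x - IR b g (c j) x - c j b * exp (- g * (b - x)) = - / g * IR b g (c (S j)) x).

Lemma abs_bnd t M : Rabs t <= M -> -M <= t <= M.
Proof. intros H. assert (h1 := Rle_abs t); assert (h2 := Rle_abs (- t)); rewrite Rabs_Ropp in h2; lra. Qed.

Definition F12 a g (c : nat -> R -> R) := fun z => / g * c 1%nat z + (- / g ^ 2) * c 2%nat z
  + / g ^ 3 * IL a g (c 3%nat) z + (/ g ^ 3 * c 3%nat a) * exp (- g * (z - a)).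
Definition F13 a g (c : nat -> R -> R) := fun z => / g ^ 2 * c 2%nat z + (- 2 / g ^ 3) * c 3%nat z
  + (2 / g ^ 4) * IL a g (c 4%nat) z + / g ^ 4 * IL a g (IL a g (c 4%nat)) z.

Definition F22 b g (c : nat -> R -> R) := fun z => (- / g) * c 1%nat z + (- / g ^ 2) * c 2%nat z
  + (- / g ^ 3) * IR b g (c 3%nat) z + (- / g ^ 3 * c 3%nat b) * exp (- g * (b - z)).
Definition F23 b g (c : nat -> R -> R) := fun z => / g ^ 2 * c 2%nat z + (2 / g ^ 3) * c 3%nat z
  + (2 / g ^ 4) * IR b g (c 4%nat) z + / g ^ 4 * IR b g (IR b g (c 4%nat)) z.

Lemma coreL3 a b g c d M : a < b -> 0 < g -> Hyp a b g 3 c d ->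
  (forall y, a <= y <= b -> Rabs (c 4%nat y) <= M) ->
  forall x, a <= x <= b -> Rabs (d 1%nat x - PL a b 3 g d x) <= 19 * (/ g) ^ 3 * M.
Proof.
  intros Hab Hg [Hc [Hcd [HL HR]]] HM x Hx.
  assert (g0 : g <> 0) by lra.
  assert (c0 := Hc 0%nat ltac:(lia)). assert (c1 := Hc 1%nat ltac:(lia)).
  assert (c2 := Hc 2%nat ltac:(lia)). assert (c3 := Hc 3%nat ltac:(lia)). assert (c4 := Hc 4%nat ltac:(lia)).
  assert (cE := cont_Eexp2 g a).
  assert (cT4 := cont_IL a g _ c4). assert (cTT4 := cont_IL a g _ cT4). assert (cT3 := cont_IL a g _ c3).
  assert (Ha : a <= a <= b) by lra. assert (Hb : a <= b <= b) by lra.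
  assert (TL : forall j y, (j < 4)%nat -> a <= y <= b ->
    IL a g (c j) y = c j y - c j a * exp (- g * (y - a)) - / g * IL a g (c (S j)) y).
  { intros j y Hj Hy. specialize (HL j y Hj Hy). lra. }
  assert (TR : forall j y, (j < 4)%nat -> a <= y <= b ->
    IR b g (c j) y = c j y - c j b * exp (- g * (b - y)) + / g * IR b g (c (S j)) y).
  { intros j y Hj Hy. specialize (HR j y Hj Hy). lra. }
  assert (E0 : exp (- g * (a - a)) = 1). { replace (- g * (a - a)) with 0 by ring. apply exp_0. }
  assert (Dc0 : forall y, a <= y <= b -> d 0%nat y = c 0%nat y) by (intros; apply Hcd; auto; lia).
  assert (P12 : forall y, a <= y <= b -> phi12 a 3 g d y = F12 a g c y).
  { intros y Hy. unfold phi12, DL, F12. rewrite sum23. cbv beta.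
    rewrite (IL_ext a b g (d 0%nat) (c 0%nat)) by auto.
    rewrite !Hcd by (auto; lia).
    rewrite (TL 0%nat y), (TL 1%nat y), (TL 2%nat y) by (auto; lia).
    field. auto. }
  assert (TP12 : forall y, a <= y <= b -> IL a g (phi12 a 3 g d) y =
     / g * IL a g (c 1%nat) y + (- / g ^ 2) * IL a g (c 2%nat) y
     + / g ^ 3 * IL a g (IL a g (c 3%nat)) y + (/ g ^ 3 * c 3%nat a) * IL a g (fun z => exp (- g * (z - a))) y).
  { intros y Hy. rewrite (IL_ext a b g _ (F12 a g c) y P12 Hy). unfold F12.
    rewrite IL_lin4; auto. }
  assert (TT3 : forall y, a <= y <= b -> IL a g (IL a g (c 3%nat)) y =
     IL a g (c 3%nat) y - c 3%nat a * IL a g (fun z => exp (- g * (z - a))) y - / g * IL a g (IL a g (c 4%nat)) y).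
  { intros y Hy.
    rewrite (IL_ext a b g _ (fun z => 1 * c 3%nat z + (- c 3%nat a) * exp (- g * (z - a)) + (- / g) * IL a g (c 4%nat) z + 0 * (fun _ => 0) z) y).
    rewrite IL_lin4; auto. ring. apply cont_const.
    intros z Hz. rewrite (TL 3%nat z) by (auto; lia). ring. auto. }
  assert (P13 : forall y, a <= y <= b -> phi13 a 3 g d y = F13 a g c y).
  { intros y Hy. unfold phi13, DL, F13. rewrite sum23. cbv beta.
    rewrite (P12 y Hy), (P12 a Ha), (TP12 y Hy), (TT3 y Hy).
    unfold F12. rewrite IL_a, E0.
    rewrite !Hcd by (auto; lia).
    rewrite (TL 1%nat y), (TL 2%nat y), (TL 3%nat y) by (auto; lia).
    simpl INR. field. auto. }
  assert (TP13 : forall y, a <= y <= b -> IL a g (phi13 a 3 g d) y =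
     / g ^ 2 * IL a g (c 2%nat) y + (- 2 / g ^ 3) * IL a g (c 3%nat) y
     + (2 / g ^ 4) * IL a g (IL a g (c 4%nat)) y + / g ^ 4 * IL a g (IL a g (IL a g (c 4%nat))) y).
  { intros y Hy. rewrite (IL_ext a b g _ (F13 a g c) y P13 Hy). unfold F13.
    rewrite IL_lin4; auto. }
  assert (KEY : d 1%nat x - (g * DL a (d 1%nat a / g) g (d 0%nat) x
      + g * (DL a 0 g (phi12 a 3 g d) x + DL a 0 g (phi13 a 3 g d) x))
      = / g ^ 3 * IL a g (IL a g (IL a g (c 4%nat))) x).
  { unfold DL. rewrite (P12 x Hx), (P12 a Ha), (P13 x Hx), (P13 a Ha), (TP12 x Hx), (TP13 x Hx), (TT3 x Hx).
    rewrite (IL_ext a b g (d 0%nat) (c 0%nat)) by auto.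
    unfold F12, F13. rewrite !IL_a, E0.
    rewrite !Hcd by (auto; lia).
    rewrite (TL 0%nat x), (TL 1%nat x), (TL 2%nat x), (TL 3%nat x) by (auto; lia).
    field. auto. }
  assert (B4 : forall y, a <= y <= b -> Rabs (IL a g (c 4%nat) y) <= M) by (intros; apply IL_bound with b; auto).
  assert (B44 : forall y, a <= y <= b -> Rabs (IL a g (IL a g (c 4%nat)) y) <= M) by (intros; apply IL_bound with b; auto).
  assert (B444 : forall y, a <= y <= b -> Rabs (IL a g (IL a g (IL a g (c 4%nat))) y) <= M) by (intros; apply IL_bound with b; auto).
  assert (R4 : forall y, a <= y <= b -> Rabs (IR b g (c 4%nat) y) <= M) by (intros; apply IR_bound with a; auto).
  assert (R44 : forall y, a <= y <= b -> Rabs (IR b g (IL a g (c 4%nat)) y) <= M) by (intros; apply IR_bound with a; auto).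
  assert (R444 : forall y, a <= y <= b -> Rabs (IR b g (IL a g (IL a g (c 4%nat))) y) <= M) by (intros; apply IR_bound with a; auto).
  assert (cF13 : cont (F13 a g c)) by (unfold F13; apply cont_lin4; auto).
  assert (DB : Rabs (D0 a b 0 0 g (F13 a g c) x) <= 2 * (/ g ^ 4 * (9 * M))).
  { apply (D0_bound a b g (F13 a g c)
      (fun y => / g ^ 4 * ( -(1/2) * (IL a g (c 4%nat) y + IR b g (c 4%nat) y) - (IL a g (c 4%nat) y - IR b g (c 4%nat) y)
          + 2 * (IL a g (c 4%nat) y - (IL a g (IL a g (c 4%nat)) y + IR b g (IL a g (c 4%nat)) y) / 2)
          + (IL a g (IL a g (c 4%nat)) y - (IL a g (IL a g (IL a g (c 4%nat))) y + IR b g (IL a g (IL a g (c 4%nat))) y) / 2)))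
      (c 2%nat a / (2 * g ^ 2) - 3 * c 3%nat a / (2 * g ^ 3))
      (c 2%nat b / (2 * g ^ 2) - c 3%nat b / (2 * g ^ 3))); auto.
    - intros y Hy. rewrite I0_split; auto. unfold F13. rewrite IL_lin4, IR_lin4; auto.
      rewrite (TL 2%nat y), (TL 3%nat y), (TR 2%nat y), (TR 3%nat y) by (auto; lia).
      field. auto.
    - intros y Hy. rewrite Rabs_mult, Rabs_pos_eq.
      2: { left. apply Rinv_0_lt_compat. apply pow_lt. auto. }
      apply Rmult_le_compat_l. left. apply Rinv_0_lt_compat. apply pow_lt. auto.
      assert (h1 := abs_bnd _ _ (B4 y Hy)). assert (h2 := abs_bnd _ _ (B44 y Hy)).
      assert (h3 := abs_bnd _ _ (B444 y Hy)). assert (h4 := abs_bnd _ _ (R4 y Hy)).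
      assert (h5 := abs_bnd _ _ (R44 y Hy)). assert (h6 := abs_bnd _ _ (R444 y Hy)).
      apply Rabs_le. lra. }
  unfold PL. rewrite sum23. cbv beta.
  change (phi1 a 3 g d 1) with (d 0%nat). change (phi1 a 3 g d 2) with (phi12 a 3 g d).
  change (phi1 a 3 g d 3) with (phi13 a 3 g d). change ((3 =? 3)%nat) with true. cbv iota.
  rewrite (D0_ext a b g (phi13 a 3 g d) (F13 a g c) x P13) by lra.
  replace (d 1%nat x - (g * DL a (d 1%nat a / g) g (d 0%nat) x + g * (DL a 0 g (phi12 a 3 g d) x + DL a 0 g (phi13 a 3 g d) x) -
      g * D0 a b 0 0 g (F13 a g c) x)) with
     (/ g ^ 3 * IL a g (IL a g (IL a g (c 4%nat))) x + g * D0 a b 0 0 g (F13 a g c) x) by (rewrite <- KEY; ring).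
  eapply Rle_trans. apply Rabs_triang.
  rewrite !Rabs_mult, (Rabs_pos_eq g), Rabs_pos_eq by (try lra; left; apply Rinv_0_lt_compat; apply pow_lt; auto).
  assert (h1 := B444 x Hx).
  assert (ig : 0 < / g ^ 3) by (apply Rinv_0_lt_compat; apply pow_lt; auto).
  replace ((/ g) ^ 3) with (/ g ^ 3) by (field; auto).
  apply Rle_trans with (/ g ^ 3 * M + g * (2 * (/ g ^ 4 * (9 * M)))).
  apply Rplus_le_compat. apply Rmult_le_compat_l; lra. apply Rmult_le_compat_l; lra.
  right. field. auto.
Qed.

Lemma coreR3 a b g c d M : a < b -> 0 < g -> Hyp a b g 3 c d ->
  (forall y, a <= y <= b -> Rabs (c 4%nat y) <= M) ->
  forall x, a <= x <= b -> Rabs (d 1%nat x - PR a b 3 g d x) <= 19 * (/ g) ^ 3 * M.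
Proof.
  intros Hab Hg [Hc [Hcd [HL HR]]] HM x Hx.
  assert (g0 : g <> 0) by lra.
  assert (c0 := Hc 0%nat ltac:(lia)). assert (c1 := Hc 1%nat ltac:(lia)).
  assert (c2 := Hc 2%nat ltac:(lia)). assert (c3 := Hc 3%nat ltac:(lia)). assert (c4 := Hc 4%nat ltac:(lia)).
  assert (cE := cont_Eexp g b).
  assert (cT4 := cont_IR b g _ c4). assert (cTT4 := cont_IR b g _ cT4). assert (cT3 := cont_IR b g _ c3).
  assert (Ha : a <= a <= b) by lra. assert (Hb : a <= b <= b) by lra.
  assert (TL : forall j y, (j < 4)%nat -> a <= y <= b ->
    IL a g (c j) y = c j y - c j a * exp (- g * (y - a)) - / g * IL a g (c (S j)) y).
  { intros j y Hj Hy. specialize (HL j y Hj Hy). lra. }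
  assert (TR : forall j y, (j < 4)%nat -> a <= y <= b ->
    IR b g (c j) y = c j y - c j b * exp (- g * (b - y)) + / g * IR b g (c (S j)) y).
  { intros j y Hj Hy. specialize (HR j y Hj Hy). lra. }
  assert (E0 : exp (- g * (b - b)) = 1). { replace (- g * (b - b)) with 0 by ring. apply exp_0. }
  assert (Dc0 : forall y, a <= y <= b -> d 0%nat y = c 0%nat y) by (intros; apply Hcd; auto; lia).
  assert (P12 : forall y, a <= y <= b -> phi22 b 3 g d y = F22 b g c y).
  { intros y Hy. unfold phi22, DR, F22. rewrite sum23. cbv beta.
    rewrite (IR_ext a b g (d 0%nat) (c 0%nat)) by auto.
    rewrite !Hcd by (auto; lia).
    rewrite (TR 0%nat y), (TR 1%nat y), (TR 2%nat y) by (auto; lia).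
    field. auto. }
  assert (TP12 : forall y, a <= y <= b -> IR b g (phi22 b 3 g d) y =
     (- / g) * IR b g (c 1%nat) y + (- / g ^ 2) * IR b g (c 2%nat) y
     + (- / g ^ 3) * IR b g (IR b g (c 3%nat)) y + (- / g ^ 3 * c 3%nat b) * IR b g (fun z => exp (- g * (b - z))) y).
  { intros y Hy. rewrite (IR_ext a b g _ (F22 b g c) y P12 Hy). unfold F22.
    rewrite IR_lin4; auto. }
  assert (TT3 : forall y, a <= y <= b -> IR b g (IR b g (c 3%nat)) y =
     IR b g (c 3%nat) y - c 3%nat b * IR b g (fun z => exp (- g * (b - z))) y + / g * IR b g (IR b g (c 4%nat)) y).
  { intros y Hy.
    rewrite (IR_ext a b g _ (fun z => 1 * c 3%nat z + (- c 3%nat b) * exp (- g * (b - z)) + (/ g) * IR b g (c 4%nat) z + 0 * (fun _ => 0) z) y).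
    rewrite IR_lin4; auto. ring. apply cont_const.
    intros z Hz. rewrite (TR 3%nat z) by (auto; lia). ring. auto. }
  assert (P13 : forall y, a <= y <= b -> phi23 b 3 g d y = F23 b g c y).
  { intros y Hy. unfold phi23, DR, F23. rewrite sum23. cbv beta.
    rewrite (P12 y Hy), (P12 b Hb), (TP12 y Hy), (TT3 y Hy).
    unfold F22. rewrite IR_b, E0.
    rewrite !Hcd by (auto; lia).
    rewrite (TR 1%nat y), (TR 2%nat y), (TR 3%nat y) by (auto; lia).
    simpl INR. field. auto. }
  assert (TP13 : forall y, a <= y <= b -> IR b g (phi23 b 3 g d) y =
     / g ^ 2 * IR b g (c 2%nat) y + (2 / g ^ 3) * IR b g (c 3%nat) y
     + (2 / g ^ 4) * IR b g (IR b g (c 4%nat)) y + / g ^ 4 * IR b g (IR b g (IR b g (c 4%nat))) y).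
  { intros y Hy. rewrite (IR_ext a b g _ (F23 b g c) y P13 Hy). unfold F23.
    rewrite IR_lin4; auto. }
  assert (KEY : d 1%nat x - (- g * DR b (- (d 1%nat b / g)) g (d 0%nat) x
      - g * (DR b 0 g (phi22 b 3 g d) x + DR b 0 g (phi23 b 3 g d) x))
      = - / g ^ 3 * IR b g (IR b g (IR b g (c 4%nat))) x).
  { unfold DR. rewrite (P12 x Hx), (P12 b Hb), (P13 x Hx), (P13 b Hb), (TP12 x Hx), (TP13 x Hx), (TT3 x Hx).
    rewrite (IR_ext a b g (d 0%nat) (c 0%nat)) by auto.
    unfold F22, F23. rewrite !IR_b, E0.
    rewrite !Hcd by (auto; lia).
    rewrite (TR 0%nat x), (TR 1%nat x), (TR 2%nat x), (TR 3%nat x) by (auto; lia).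
    field. auto. }
  assert (B4 : forall y, a <= y <= b -> Rabs (IL a g (c 4%nat) y) <= M) by (intros; apply IL_bound with b; auto).
  assert (B44 : forall y, a <= y <= b -> Rabs (IL a g (IR b g (c 4%nat)) y) <= M) by (intros; apply IL_bound with b; auto; intros; apply IR_bound with a; auto).
  assert (B444 : forall y, a <= y <= b -> Rabs (IL a g (IR b g (IR b g (c 4%nat))) y) <= M) by (intros; apply IL_bound with b; auto; intros; apply IR_bound with a; auto; intros; apply IR_bound with a; auto).
  assert (R4 : forall y, a <= y <= b -> Rabs (IR b g (c 4%nat) y) <= M) by (intros; apply IR_bound with a; auto).
  assert (R44 : forall y, a <= y <= b -> Rabs (IR b g (IR b g (c 4%nat)) y) <= M) by (intros; apply IR_bound with a; auto).
  assert (R444 : forall y, a <= y <= b -> Rabs (IR b g (IR b g (IR b g (c 4%nat))) y) <= M) by (intros; apply IR_bound with a; auto).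
  assert (cF13 : cont (F23 b g c)) by (unfold F23; apply cont_lin4; auto).
  assert (DB : Rabs (D0 a b 0 0 g (F23 b g c) x) <= 2 * (/ g ^ 4 * (9 * M))).
  { apply (D0_bound a b g (F23 b g c)
      (fun y => / g ^ 4 * ( -(1/2) * (IL a g (c 4%nat) y + IR b g (c 4%nat) y) + (IL a g (c 4%nat) y - IR b g (c 4%nat) y)
          + 2 * (IR b g (c 4%nat) y - (IL a g (IR b g (c 4%nat)) y + IR b g (IR b g (c 4%nat)) y) / 2)
          + (IR b g (IR b g (c 4%nat)) y - (IL a g (IR b g (IR b g (c 4%nat))) y + IR b g (IR b g (IR b g (c 4%nat))) y) / 2)))
      (c 2%nat a / (2 * g ^ 2) + c 3%nat a / (2 * g ^ 3))
      (c 2%nat b / (2 * g ^ 2) + 3 * c 3%nat b / (2 * g ^ 3))); auto.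
    - intros y Hy. rewrite I0_split; auto. unfold F23. rewrite IL_lin4, IR_lin4; auto.
      rewrite (TL 2%nat y), (TL 3%nat y), (TR 2%nat y), (TR 3%nat y) by (auto; lia).
      field. auto.
    - intros y Hy. rewrite Rabs_mult, Rabs_pos_eq.
      2: { left. apply Rinv_0_lt_compat. apply pow_lt. auto. }
      apply Rmult_le_compat_l. left. apply Rinv_0_lt_compat. apply pow_lt. auto.
      assert (h1 := abs_bnd _ _ (B4 y Hy)). assert (h2 := abs_bnd _ _ (B44 y Hy)).
      assert (h3 := abs_bnd _ _ (B444 y Hy)). assert (h4 := abs_bnd _ _ (R4 y Hy)).
      assert (h5 := abs_bnd _ _ (R44 y Hy)). assert (h6 := abs_bnd _ _ (R444 y Hy)).
      apply Rabs_le. lra. }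
  unfold PR. rewrite sum23. cbv beta.
  change (phi2 b 3 g d 1) with (d 0%nat). change (phi2 b 3 g d 2) with (phi22 b 3 g d).
  change (phi2 b 3 g d 3) with (phi23 b 3 g d). change ((3 =? 3)%nat) with true. cbv iota.
  rewrite (D0_ext a b g (phi23 b 3 g d) (F23 b g c) x P13) by lra.
  replace (d 1%nat x - (- g * DR b (- (d 1%nat b / g)) g (d 0%nat) x - g * (DR b 0 g (phi22 b 3 g d) x + DR b 0 g (phi23 b 3 g d) x) +
      g * D0 a b 0 0 g (F23 b g c) x)) with
     (- / g ^ 3 * IR b g (IR b g (IR b g (c 4%nat))) x + - g * D0 a b 0 0 g (F23 b g c) x) by (rewrite <- KEY; ring).
  eapply Rle_trans. apply Rabs_triang.
  rewrite !Rabs_mult, !Rabs_Ropp, (Rabs_pos_eq g), Rabs_pos_eq by (try lra; left; apply Rinv_0_lt_compat; apply pow_lt; auto).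
  assert (h1 := R444 x Hx).
  assert (ig : 0 < / g ^ 3) by (apply Rinv_0_lt_compat; apply pow_lt; auto).
  replace ((/ g) ^ 3) with (/ g ^ 3) by (field; auto).
  apply Rle_trans with (/ g ^ 3 * M + g * (2 * (/ g ^ 4 * (9 * M)))).
  apply Rplus_le_compat. apply Rmult_le_compat_l; lra. apply Rmult_le_compat_l; lra.
  right. field. auto.
Qed.

Ltac prep Hc Hcd HL HR g0 :=
  idtac.

Definition G12 a g (c : nat -> R -> R) := fun z => / g * c 1%nat z + (- / g ^ 2) * IL a g (c 2%nat) z
  + (- / g ^ 2 * c 2%nat a) * exp (- g * (z - a)) + 0 * (fun _ => 0) z.
Definition G22 b g (c : nat -> R -> R) := fun z => (- / g) * c 1%nat z + (- / g ^ 2) * IR b g (c 2%nat) z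
  + (- / g ^ 2 * c 2%nat b) * exp (- g * (b - z)) + 0 * (fun _ => 0) z.

Lemma coreL2 a b g c d M : a < b -> 0 < g -> Hyp a b g 2 c d ->
  (forall y, a <= y <= b -> Rabs (c 3%nat y) <= M) ->
  forall x, a <= x <= b -> Rabs (d 1%nat x - PL a b 2 g d x) <= 19 * (/ g) ^ 2 * M.
Proof.
  intros Hab Hg [Hc [Hcd [HL HR]]] HM x Hx.
  assert (g0 : g <> 0) by lra.
  assert (c0 := Hc 0%nat ltac:(lia)). assert (c1 := Hc 1%nat ltac:(lia)).
  assert (c2 := Hc 2%nat ltac:(lia)). assert (c3 := Hc 3%nat ltac:(lia)).
  assert (cE := cont_Eexp2 g a). assert (cT2 := cont_IL a g _ c2). assert (cT3 := cont_IL a g _ c3).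
  assert (Ha : a <= a <= b) by lra. assert (Hb : a <= b <= b) by lra.
  assert (TL : forall j y, (j < 3)%nat -> a <= y <= b ->
    IL a g (c j) y = c j y - c j a * exp (- g * (y - a)) - / g * IL a g (c (S j)) y).
  { intros j y Hj Hy. specialize (HL j y Hj Hy). lra. }
  assert (E0 : exp (- g * (a - a)) = 1). { replace (- g * (a - a)) with 0 by ring. apply exp_0. }
  assert (P12 : forall y, a <= y <= b -> phi12 a 2 g d y = G12 a g c y).
  { intros y Hy. unfold phi12, DL, G12. rewrite sum22. cbv beta.
    rewrite (IL_ext a b g (d 0%nat) (c 0%nat)) by (auto; intros; apply Hcd; auto; lia).
    rewrite !Hcd by (auto; lia).
    rewrite (TL 0%nat y), (TL 1%nat y) by (auto; lia).
    field. auto. }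
  assert (TP12 : forall y, a <= y <= b -> IL a g (phi12 a 2 g d) y =
     / g * IL a g (c 1%nat) y + (- / g ^ 2) * IL a g (IL a g (c 2%nat)) y
     + (- / g ^ 2 * c 2%nat a) * IL a g (fun z => exp (- g * (z - a))) y + 0 * IL a g (fun _ => 0) y).
  { intros y Hy. rewrite (IL_ext a b g _ (G12 a g c) y P12 Hy). unfold G12.
    rewrite IL_lin4; auto. apply cont_const. }
  assert (TT2 : forall y, a <= y <= b -> IL a g (IL a g (c 2%nat)) y =
     IL a g (c 2%nat) y - c 2%nat a * IL a g (fun z => exp (- g * (z - a))) y - / g * IL a g (IL a g (c 3%nat)) y).
  { intros y Hy.
    rewrite (IL_ext a b g _ (fun z => 1 * c 2%nat z + (- c 2%nat a) * exp (- g * (z - a)) + (- / g) * IL a g (c 3%nat) z + 0 * (fun _ => 0) z) y).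
    rewrite IL_lin4; auto. ring. apply cont_const.
    intros z Hz. rewrite (TL 2%nat z) by (auto; lia). ring. auto. }
  assert (KEY : d 1%nat x - (g * DL a (d 1%nat a / g) g (d 0%nat) x + g * DL a 0 g (phi12 a 2 g d) x)
      = / g ^ 2 * IL a g (IL a g (c 3%nat)) x).
  { unfold DL. rewrite (P12 x Hx), (P12 a Ha), (TP12 x Hx), (TT2 x Hx).
    rewrite (IL_ext a b g (d 0%nat) (c 0%nat)) by (auto; intros; apply Hcd; auto; lia).
    unfold G12. rewrite !IL_a, E0.
    rewrite !Hcd by (auto; lia).
    rewrite (TL 0%nat x), (TL 1%nat x), (TL 2%nat x) by (auto; lia).
    field. auto. }
  unfold PL. rewrite sum22. cbv beta.
  change (phi1 a 2 g d 1) with (d 0%nat). change (phi1 a 2 g d 2) with (phi12 a 2 g d).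
  change ((2 =? 3)%nat) with false. cbv iota.
  replace (d 1%nat x - (g * DL a (d 1%nat a / g) g (d 0%nat) x + g * DL a 0 g (phi12 a 2 g d) x - 0))
    with (/ g ^ 2 * IL a g (IL a g (c 3%nat)) x) by (rewrite <- KEY; ring).
  assert (h1 : Rabs (IL a g (IL a g (c 3%nat)) x) <= M).
  { apply IL_bound with b; auto. intros; apply IL_bound with b; auto. }
  assert (M0 : 0 <= M) by (eapply Rle_trans; [apply Rabs_pos | apply h1]).
  assert (ig : 0 < / g ^ 2) by (apply Rinv_0_lt_compat; apply pow_lt; auto).
  rewrite Rabs_mult, Rabs_pos_eq by lra.
  replace ((/ g) ^ 2) with (/ g ^ 2) by (field; auto). nra.
Qed.

Lemma coreR2 a b g c d M : a < b -> 0 < g -> Hyp a b g 2 c d ->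
  (forall y, a <= y <= b -> Rabs (c 3%nat y) <= M) ->
  forall x, a <= x <= b -> Rabs (d 1%nat x - PR a b 2 g d x) <= 19 * (/ g) ^ 2 * M.
Proof.
  intros Hab Hg [Hc [Hcd [HL HR]]] HM x Hx.
  assert (g0 : g <> 0) by lra.
  assert (c0 := Hc 0%nat ltac:(lia)). assert (c1 := Hc 1%nat ltac:(lia)).
  assert (c2 := Hc 2%nat ltac:(lia)). assert (c3 := Hc 3%nat ltac:(lia)).
  assert (cE := cont_Eexp g b). assert (cT2 := cont_IR b g _ c2). assert (cT3 := cont_IR b g _ c3).
  assert (Ha : a <= a <= b) by lra. assert (Hb : a <= b <= b) by lra.
  assert (TR : forall j y, (j < 3)%nat -> a <= y <= b ->
    IR b g (c j) y = c j y - c j b * exp (- g * (b - y)) + / g * IR b g (c (S j)) y).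
  { intros j y Hj Hy. specialize (HR j y Hj Hy). lra. }
  assert (E0 : exp (- g * (b - b)) = 1). { replace (- g * (b - b)) with 0 by ring. apply exp_0. }
  assert (P12 : forall y, a <= y <= b -> phi22 b 2 g d y = G22 b g c y).
  { intros y Hy. unfold phi22, DR, G22. rewrite sum22. cbv beta.
    rewrite (IR_ext a b g (d 0%nat) (c 0%nat)) by (auto; intros; apply Hcd; auto; lia).
    rewrite !Hcd by (auto; lia).
    rewrite (TR 0%nat y), (TR 1%nat y) by (auto; lia).
    field. auto. }
  assert (TP12 : forall y, a <= y <= b -> IR b g (phi22 b 2 g d) y =
     (- / g) * IR b g (c 1%nat) y + (- / g ^ 2) * IR b g (IR b g (c 2%nat)) y
     + (- / g ^ 2 * c 2%nat b) * IR b g (fun z => exp (- g * (b - z))) y + 0 * IR b g (fun _ => 0) y).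
  { intros y Hy. rewrite (IR_ext a b g _ (G22 b g c) y P12 Hy). unfold G22.
    rewrite IR_lin4; auto. apply cont_const. }
  assert (TT2 : forall y, a <= y <= b -> IR b g (IR b g (c 2%nat)) y =
     IR b g (c 2%nat) y - c 2%nat b * IR b g (fun z => exp (- g * (b - z))) y + / g * IR b g (IR b g (c 3%nat)) y).
  { intros y Hy.
    rewrite (IR_ext a b g _ (fun z => 1 * c 2%nat z + (- c 2%nat b) * exp (- g * (b - z)) + (/ g) * IR b g (c 3%nat) z + 0 * (fun _ => 0) z) y).
    rewrite IR_lin4; auto. ring. apply cont_const.
    intros z Hz. rewrite (TR 2%nat z) by (auto; lia). ring. auto. }
  assert (KEY : d 1%nat x - (- g * DR b (- (d 1%nat b / g)) g (d 0%nat) x - g * DR b 0 g (phi22 b 2 g d) x)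
      = / g ^ 2 * IR b g (IR b g (c 3%nat)) x).
  { unfold DR. rewrite (P12 x Hx), (P12 b Hb), (TP12 x Hx), (TT2 x Hx).
    rewrite (IR_ext a b g (d 0%nat) (c 0%nat)) by (auto; intros; apply Hcd; auto; lia).
    unfold G22. rewrite !IR_b, E0.
    rewrite !Hcd by (auto; lia).
    rewrite (TR 0%nat x), (TR 1%nat x), (TR 2%nat x) by (auto; lia).
    field. auto. }
  unfold PR. rewrite sum22. cbv beta.
  change (phi2 b 2 g d 1) with (d 0%nat). change (phi2 b 2 g d 2) with (phi22 b 2 g d).
  change ((2 =? 3)%nat) with false. cbv iota.
  replace (d 1%nat x - (- g * DR b (- (d 1%nat b / g)) g (d 0%nat) x - g * DR b 0 g (phi22 b 2 g d) x + 0))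
    with (/ g ^ 2 * IR b g (IR b g (c 3%nat)) x) by (rewrite <- KEY; ring).
  assert (h1 : Rabs (IR b g (IR b g (c 3%nat)) x) <= M).
  { apply IR_bound with a; auto. intros; apply IR_bound with a; auto. }
  assert (M0 : 0 <= M) by (eapply Rle_trans; [apply Rabs_pos | apply h1]).
  assert (ig : 0 < / g ^ 2) by (apply Rinv_0_lt_compat; apply pow_lt; auto).
  rewrite Rabs_mult, Rabs_pos_eq by lra.
  replace ((/ g) ^ 2) with (/ g ^ 2) by (field; auto). nra.
Qed.

Lemma coreL1 a b g c d M : a < b -> 0 < g -> Hyp a b g 1 c d ->
  (forall y, a <= y <= b -> Rabs (c 2%nat y) <= M) ->
  forall x, a <= x <= b -> Rabs (d 1%nat x - PL a b 1 g d x) <= 19 * (/ g) ^ 1 * M.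
Proof.
  intros Hab Hg [Hc [Hcd [HL HR]]] HM x Hx.
  assert (g0 : g <> 0) by lra.
  assert (c0 := Hc 0%nat ltac:(lia)). assert (c1 := Hc 1%nat ltac:(lia)). assert (c2 := Hc 2%nat ltac:(lia)).
  assert (Ha : a <= a <= b) by lra.
  assert (TL : forall j y, (j < 2)%nat -> a <= y <= b ->
    IL a g (c j) y = c j y - c j a * exp (- g * (y - a)) - / g * IL a g (c (S j)) y).
  { intros j y Hj Hy. specialize (HL j y Hj Hy). lra. }
  unfold PL. rewrite sum21. change (phi1 a 1 g d 1) with (d 0%nat).
  change ((1 =? 3)%nat) with false. cbv iota.
  replace (d 1%nat x - (g * DL a (d 1%nat a / g) g (d 0%nat) x + g * 0 - 0))
    with (/ g * IL a g (c 2%nat) x).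
  2: { unfold DL. rewrite (IL_ext a b g (d 0%nat) (c 0%nat)) by (auto; intros; apply Hcd; auto; lia).
       rewrite !Hcd by (auto; lia).
       rewrite (TL 0%nat x), (TL 1%nat x) by (auto; lia). field. auto. }
  assert (h1 : Rabs (IL a g (c 2%nat) x) <= M) by (apply IL_bound with b; auto).
  assert (M0 : 0 <= M) by (eapply Rle_trans; [apply Rabs_pos | apply h1]).
  assert (ig : 0 < / g) by (apply Rinv_0_lt_compat; auto).
  rewrite Rabs_mult, Rabs_pos_eq by lra. simpl. nra.
Qed.

Lemma coreR1 a b g c d M : a < b -> 0 < g -> Hyp a b g 1 c d ->
  (forall y, a <= y <= b -> Rabs (c 2%nat y) <= M) ->
  forall x, a <= x <= b -> Rabs (d 1%nat x - PR a b 1 g d x) <= 19 * (/ g) ^ 1 * M.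
Proof.
  intros Hab Hg [Hc [Hcd [HL HR]]] HM x Hx.
  assert (g0 : g <> 0) by lra.
  assert (c0 := Hc 0%nat ltac:(lia)). assert (c1 := Hc 1%nat ltac:(lia)). assert (c2 := Hc 2%nat ltac:(lia)).
  assert (Hb : a <= b <= b) by lra.
  assert (TR : forall j y, (j < 2)%nat -> a <= y <= b ->
    IR b g (c j) y = c j y - c j b * exp (- g * (b - y)) + / g * IR b g (c (S j)) y).
  { intros j y Hj Hy. specialize (HR j y Hj Hy). lra. }
  unfold PR. rewrite sum21. change (phi2 b 1 g d 1) with (d 0%nat).
  change ((1 =? 3)%nat) with false. cbv iota.
  replace (d 1%nat x - (- g * DR b (- (d 1%nat b / g)) g (d 0%nat) x - g * 0 + 0))
    with (- / g * IR b g (c 2%nat) x).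
  2: { unfold DR. rewrite (IR_ext a b g (d 0%nat) (c 0%nat)) by (auto; intros; apply Hcd; auto; lia).
       rewrite !Hcd by (auto; lia).
       rewrite (TR 0%nat x), (TR 1%nat x) by (auto; lia). field. auto. }
  assert (h1 : Rabs (IR b g (c 2%nat) x) <= M) by (apply IR_bound with a; auto).
  assert (M0 : 0 <= M) by (eapply Rle_trans; [apply Rabs_pos | apply h1]).
  assert (ig : 0 < / g) by (apply Rinv_0_lt_compat; auto).
  rewrite Rabs_mult, Rabs_Ropp, Rabs_pos_eq by lra. simpl. nra.
Qed.


Lemma build_Hyp a b g k d : a < b -> 0 < g -> Cn_ab (S k) a b d -> exists c, Hyp a b g k c d.
Proof.
  intros Hab Hg [Hder Hcon].
  assert (cw : forall j, (j <= S k)%nat -> cont_within a b (d j)).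
  { intros j Hj. destruct (Nat.eq_dec j (S k)) as [->|Hne]. auto.
    apply deriv_cont with (d (S j)). apply Hder. lia. }
  pose (c := fun j => if (j <=? k)%nat then linext a b (d j) (d (S j)) else clampf a b (d j)).
  assert (cL : forall j, (j <= k)%nat -> c j = linext a b (d j) (d (S j))).
  { intros j Hj. unfold c. rewrite (proj2 (Nat.leb_le j k) Hj). reflexivity. }
  assert (cR : c (S k) = clampf a b (d (S k))).
  { unfold c. replace ((S k <=? k)%nat) with false. reflexivity. symmetry. apply Nat.leb_gt. lia. }
  assert (Hdv : forall j, (j <= k)%nat -> forall y, is_derive (c j) y (clampf a b (d (S j)) y)).
  { intros j Hj y. rewrite cL by auto. apply linext_der; auto. apply Hder. lia. }
  assert (Hcd : forall j y, (j <= S k)%nat -> a <= y <= b -> d j y = c j y).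
  { intros j y Hj Hy. destruct (Nat.eq_dec j (S k)) as [->|Hne].
    rewrite cR, clampf_id; auto. rewrite cL by lia. rewrite linext_id; auto. }
  assert (Hclc : forall j, (j < S k)%nat -> cont (clampf a b (d (S j)))).
  { intros j Hj. apply clampf_cont; auto. }
  exists c. split; [|split; [|split]].
  - intros j Hj. destruct (Nat.eq_dec j (S k)) as [->|Hne].
    rewrite cR. apply clampf_cont; auto.
    apply der_cont with (clampf a b (d (S j))). apply Hdv. lia.
  - auto.
  - intros j x Hj Hx. rewrite (IBP_L a g (c j) (clampf a b (d (S j))) x Hg); auto.
    f_equal. apply IL_ext with b; auto. intros y Hy. rewrite clampf_id by auto. apply Hcd; auto.
    apply Hdv. lia.
  - intros j x Hj Hx. rewrite (IBP_R b g (c j) (clampf a b (d (S j))) x Hg); auto.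
    f_equal. apply IR_ext with a; auto. intros y Hy. rewrite clampf_id by auto. apply Hcd; auto.
    apply Hdv. lia.
Qed.

Theorem theorem2 (a b : R) (k : nat) :
  a < b -> (1 <= k <= 3)%nat ->
  exists C : R, 0 < C /\
    forall (g : R) (d : nat -> R -> R),
      0 < g -> Cn_ab (S k) a b d ->
      supnorm a b (fun x => d 1%nat x - PL a b k g d x)
        <= C * (/ g) ^ k * supnorm a b (d (S k)) /\
      supnorm a b (fun x => d 1%nat x - PR a b k g d x)
        <= C * (/ g) ^ k * supnorm a b (d (S k)).
Proof.
  intros Hab Hk. exists 19. split. lra.
  intros g d Hg Hd.
  destruct (build_Hyp a b g k d Hab Hg Hd) as [c Hc].
  assert (Hc' := Hc). destruct Hc' as [Hcont [Hcd _]].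
  destruct (cont_bounded a b (c (S k)) ltac:(lra) (Hcont (S k) (le_n _))) as [B HB].
  assert (HM : forall y, a <= y <= b -> Rabs (c (S k) y) <= supnorm a b (d (S k))).
  { intros y Hy. rewrite <- Hcd by (auto; lia). apply sup_ge with B. lra.
    intros z Hz. rewrite Hcd by (auto; lia). auto. auto. }
  split; apply sup_le; try lra; intros x Hx.
  - destruct k as [|[|[|[|k]]]]; try lia.
    + apply (coreL1 a b g c d); auto.
    + apply (coreL2 a b g c d); auto.
    + apply (coreL3 a b g c d); auto.
  - destruct k as [|[|[|[|k]]]]; try lia.
    + apply (coreR1 a b g c d); auto.
    + apply (coreR2 a b g c d); auto.
    + apply (coreR3 a b g c d); auto.
Qed.
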